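(* Suppose Assumption 1 holds. Let $J\subseteq\{1,\dots,q\}$ with $|J|\le q^*$ and $J_0\setminus J\neq\emptyset$, and let $l=|J_0\setminus J|$. Then $$\|\Pi_{J_0}f\|^2-\|\Pi_Jf\|^2=\|f-\Pi_Jf\|^2\ge(1-\rho_{q^*}^2)\kappa_l.$$
   Context: Let $q\ge1$ and let $(Y,X)$ be a pair of random variables with $X=(X_1,\dots,X_q)^T$, each $X_j$ real-valued, and $Y=\sum_{j=1}^q f_j(X_j)+\epsilon$, where $f_j\in L^2(\mathbb P^{X_j})$, $\mathbb E[f_j(X_j)]=0$ for $j=1,\dots,q-1$, and $\epsilon$ is a centered Gaussian variable with variance $\sigma^2$, independent of $X$. Write $f(x)=\sum_{j=1}^qf_j(x_j)$. The space $L^2(\mathbb P^X)$ carries the inner product $\langle g,h\rangle=\mathbb E[g(X)h(X)]$ and norm $\|g\|=\langle g,g\rangle^{1/2}$. Let $H_q=L^2(\mathbb P^{X_q})$ and $H_j=\{h\in L^2(\mathbb P^{X_j}):\mathbb E[h(X_j)]=0\}$ for $j<q$, viewed as subspaces of $L^2(\mathbb P^X)$ via $x\mapsto h(x_j)$; for $J\subseteq\{1,\dots,q\}$ let $H_J=\sum_{j\in J}H_j$ (with $H_\emptyset=\{0\}$). Under Assumption 1 the spaces $H_J$ with $|J|\le 2q^*$ are closed, and $\Pi_J$ denotes the orthogonal projection of $L^2(\mathbb P^X)$ onto $H_J$. Let $J_0=\{j:\|f_j\|>0\}$, $s=|J_0|$, and let $q^*$ be an integer with $s\le q^*$. Let $\rho_{q^*}$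 be the supremum of $\langle h_1,h_2\rangle/(\|h_1\|\|h_2\|)$ over all nonzero $h_1\in H_{J_1}$, $h_2\in H_{J_2}$ and all $J_1,J_2\subseteq\{1,\dots,q\}$ with $J_1\cap J_2=\emptyset$ and $|J_1|,|J_2|\le q^*$. Assumption 1 is the condition $\rho_{q^*}<1$. For $1\le l\le s$, $\kappa_l=\min_{J'\subseteq J_0,|J'|=l}\|\sum_{j\in J'}f_j\|^2$. *)

(* Defs.v *)
(* real numbers from Stdlib Reals.
   mathcomp-analysis / measure theory is not available, so L^2(P^X) is
   modelled as an abstract real inner-product space. *)
From Stdlib Require Import Reals List Arith.
Import ListNotations.
Open Scope R_scope.

Record IPS := {
  car :> Type;
  vzero : car;
  vadd : car -> car -> car;
  vopp : car -> car;
  vscal : R -> car -> car;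
  ip : car -> car -> R;
  vadd_comm : forall x y, vadd x y = vadd y x;
  vadd_assoc : forall x y z, vadd x (vadd y z) = vadd (vadd x y) z;
  vadd_0 : forall x, vadd x vzero = x;
  vadd_opp : forall x, vadd x (vopp x) = vzero;
  vscal_1 : forall x, vscal 1 x = x;
  vscal_assoc : forall a b x, vscal a (vscal b x) = vscal (a * b) x;
  vscal_distr_v : forall a x y, vscal a (vadd x y) = vadd (vscal a x) (vscal a y);
  vscal_distr_s : forall a b x, vscal (a + b) x = vadd (vscal a x) (vscal b x);
  ip_sym : forall x y, ip x y = ip y x;
  ip_add_l : forall x y z, ip (vadd x y) z = ip x z + ip y z;
  ip_scal_l : forall a x y, ip (vscal a x) y = a * ip x y;
  ip_pos : forall x, 0 <= ip x x;
  ip_def : forall x, ip x x = 0 -> x = vzero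
}.

Arguments vzero {_}.
Arguments vadd {_} _ _.
Arguments vopp {_} _.
Arguments vscal {_} _ _.
Arguments ip {_} _ _.

Definition vsub {V : IPS} (x y : V) : V := vadd x (vopp y).

Definition norm {V : IPS} (x : V) : R := sqrt (ip x x).

Definition sumV {V : IPS} (J : list nat) (F : nat -> V) : V :=
  fold_right (fun j acc => vadd (F j) acc) vzero J.

Definition is_subspace {V : IPS} (S : V -> Prop) : Prop :=
  S vzero /\ (forall x y, S x -> S y -> S (vadd x y)) /\
  (forall a x, S x -> S (vscal a x)).

Definition index_set (q : nat) (J : list nat) : Prop :=
  NoDup J /\ forall j, In j J -> (1 <= j <= q)%nat.

Definition inHJ {V : IPS} (H : nat -> V -> Prop) (J : list nat) (g : V) : Prop :=
  exists hs : nat -> V, (forall j, In j J -> H j (hs j)) /\ g = sumV J hs.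

(* Pi J is the orthogonal projection onto H_J, for every J subset {1..q}
   with |J| <= 2 q* (these H_J are closed under Assumption 1). *)
Definition is_proj_family {V : IPS} (q qstar : nat) (H : nat -> V -> Prop)
  (Pi : list nat -> V -> V) : Prop :=
  forall J, index_set q J -> (length J <= 2 * qstar)%nat ->
    forall g, inHJ H J (Pi J g) /\
              (forall h, inHJ H J h -> ip (vsub g (Pi J g)) h = 0).

(* The value 0 is added so that the supremum is 0 (rather than undefined)
   when this set is empty (q = 1); when the set is nonempty it is symmetric
   under h1 -> -h1, so its supremum is >= 0 and adding 0 changes nothing. *)
Definition rho_set {V : IPS} (q qstar : nat) (H : nat -> V -> Prop) (c : R) : Prop :=
  c = 0 \/
  exists J1 J2 (h1 h2 : V),
    index_set q J1 /\ index_set q J2 /\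
    (forall j, In j J1 -> ~ In j J2) /\
    (length J1 <= qstar)%nat /\ (length J2 <= qstar)%nat /\
    inHJ H J1 h1 /\ inHJ H J2 h2 /\ h1 <> vzero /\ h2 <> vzero /\
    c = ip h1 h2 / (norm h1 * norm h2).

Definition is_J0 {V : IPS} (q : nat) (fj : nat -> V) (J0 : list nat) : Prop :=
  NoDup J0 /\ forall j, In j J0 <-> ((1 <= j <= q)%nat /\ norm (fj j) > 0).

Definition ldiff (A B : list nat) : list nat :=
  filter (fun j => negb (existsb (Nat.eqb j) B)) A.

Definition is_min (P : R -> Prop) (m : R) : Prop :=
  P m /\ forall x, P x -> m <= x.

Definition kappa_set {V : IPS} (fj : nat -> V) (J0 : list nat) (l : nat) (x : R) : Prop :=
  exists J', NoDup J' /\ incl J' J0 /\ length J' = l /\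
             x = norm (sumV J' fj) ^ 2.

(* Main.v *)
Require Import Defs.
From Stdlib Require Import Reals List Arith.
From Stdlib Require Import Permutation Lra Psatz Classical.
Open Scope R_scope.
Arguments vadd_comm {_}. Arguments vadd_assoc {_}. Arguments vadd_0 {_}. Arguments vadd_opp {_}. Arguments vscal_1 {_}.
Arguments vscal_distr_v {_}. Arguments vscal_distr_s {_}. Arguments ip_sym {_}. Arguments ip_add_l {_}. Arguments ip_scal_l {_}. Arguments ip_pos {_}. Arguments ip_def {_}.

Section V.
Variable V : IPS.

Lemma add0l (x : V) : vadd vzero x = x.
Proof. rewrite vadd_comm; apply vadd_0. Qed.

Lemma add_cancel (x y : V) : vadd x y = x -> y = vzero.
Proof.
  intro E. assert (E2: vadd (vopp x) (vadd x y) = vadd (vopp x) x) by now rewrite E.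
  rewrite vadd_assoc, (vadd_comm (vopp x) x), vadd_opp, add0l in E2.
  exact E2.
Qed.

Lemma scal0 (x : V) : vscal 0 x = vzero.
Proof.
  apply (add_cancel (vscal 0 x)). rewrite <- vscal_distr_s. f_equal; ring.
Qed.

Lemma scal_zero (a : R) : vscal a (@vzero V) = vzero.
Proof.
  apply (add_cancel (vscal a vzero)). rewrite <- vscal_distr_v, vadd_0. reflexivity.
Qed.

Lemma opp_scal (x : V) : vopp x = vscal (-1) x.
Proof.
  assert (E: vadd x (vscal (-1) x) = vzero).
  { rewrite <- (vscal_1 x) at 1. rewrite <- vscal_distr_s.
    replace (1 + -1) with 0 by ring. apply scal0. }
  assert (E2: vadd (vopp x) (vadd x (vscal (-1) x)) = vopp x) by now rewrite E, vadd_0.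
  rewrite vadd_assoc, (vadd_comm (vopp x) x), vadd_opp, add0l in E2. auto.
Qed.

Lemma ip0l (y : V) : ip vzero y = 0.
Proof.
  assert (E: ip (vadd vzero vzero) y = ip (@vzero V) y) by now rewrite vadd_0.
  rewrite ip_add_l in E. lra.
Qed.

Lemma ip_opp_l (x y : V) : ip (vopp x) y = - ip x y.
Proof. rewrite opp_scal, ip_scal_l. ring. Qed.

Lemma ip_opp_r (x y : V) : ip x (vopp y) = - ip x y.
Proof. rewrite ip_sym, ip_opp_l, ip_sym. reflexivity. Qed.

Lemma ip_add_r (x y z : V) : ip x (vadd y z) = ip x y + ip x z.
Proof. rewrite ip_sym, ip_add_l, !(ip_sym _ x). reflexivity. Qed.

Lemma norm2 (x : V) : norm x ^ 2 = ip x x.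
Proof. unfold norm. apply pow2_sqrt, ip_pos. Qed.

Lemma swap4 (a b c d : V) : vadd (vadd a b) (vadd c d) = vadd (vadd a c) (vadd b d).
Proof.
  rewrite <- !vadd_assoc. f_equal. rewrite !vadd_assoc. f_equal. apply vadd_comm.
Qed.

Lemma sumV_add (L : list nat) (F G : nat -> V) :
  sumV L (fun j => vadd (F j) (G j)) = vadd (sumV L F) (sumV L G).
Proof.
  induction L; simpl. now rewrite vadd_0. rewrite IHL. apply swap4.
Qed.

Lemma sumV_scal (L : list nat) a (F : nat -> V) :
  sumV L (fun j => vscal a (F j)) = vscal a (sumV L F).
Proof.
  induction L; simpl. now rewrite scal_zero. now rewrite IHL, vscal_distr_v.
Qed.

Lemma sumV_zero (L : list nat) (F : nat -> V) :
  (forall j, In j L -> F j = vzero) -> sumV L F = vzero.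
Proof.
  induction L; simpl; intros Hz; auto. rewrite Hz by auto. rewrite IHL by auto.
  apply vadd_0.
Qed.

Lemma sumV_perm (L L' : list nat) (F : nat -> V) :
  Permutation L L' -> sumV L F = sumV L' F.
Proof.
  induction 1; simpl; auto.
  - now rewrite IHPermutation.
  - rewrite !vadd_assoc. f_equal. apply vadd_comm.
  - congruence.
Qed.

Lemma sumV_filter (p : nat -> bool) (L : list nat) (F : nat -> V) :
  sumV L F = vadd (sumV (filter p L) F) (sumV (filter (fun j => negb (p j)) L) F).
Proof.
  induction L; simpl. now rewrite vadd_0.
  destruct (p a); simpl; rewrite IHL.
  - apply vadd_assoc.
  - rewrite !vadd_assoc. f_equal. apply vadd_comm.
Qed.

Lemma sumV_filter_drop (p : nat -> bool) (L : list nat) (F : nat -> V) :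
  (forall j, In j L -> p j = false -> F j = vzero) -> sumV L F = sumV (filter p L) F.
Proof.
  intro Hz. rewrite (sumV_filter p). rewrite (sumV_zero (filter (fun j => negb (p j)) L)).
  - apply vadd_0.
  - intros j Hj. apply filter_In in Hj. destruct Hj as [Hj Hp].
    apply Hz; auto. destruct (p j); auto; discriminate.
Qed.

Variable H : nat -> V -> Prop.
Hypothesis Hsub : forall j, is_subspace (H j).

Lemma inHJ_zero J : inHJ H J vzero.
Proof.
  exists (fun _ => vzero). split. intros; apply Hsub.
  symmetry; apply sumV_zero; auto.
Qed.

Lemma inHJ_add J x y : inHJ H J x -> inHJ H J y -> inHJ H J (vadd x y).
Proof.
  intros [h1 [H1 E1]] [h2 [H2 E2]]. exists (fun j => vadd (h1 j) (h2 j)). split.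
  - intros j Hj. apply Hsub; auto.
  - now rewrite sumV_add, E1, E2.
Qed.

Lemma inHJ_scal J a x : inHJ H J x -> inHJ H J (vscal a x).
Proof.
  intros [h1 [H1 E1]]. exists (fun j => vscal a (h1 j)). split.
  - intros j Hj. apply Hsub; auto.
  - now rewrite sumV_scal, E1.
Qed.

Lemma inHJ_opp J x : inHJ H J x -> inHJ H J (vopp x).
Proof. rewrite opp_scal. apply inHJ_scal. Qed.

Lemma inHJ_sub J x y : inHJ H J x -> inHJ H J y -> inHJ H J (vsub x y).
Proof. intros. unfold vsub. apply inHJ_add; auto. now apply inHJ_opp. Qed.

Lemma inHJ_single J j x : NoDup J -> In j J -> H j x -> inHJ H J x.
Proof.
  intros ND Hj Hx. exists (fun k => if Nat.eqb k j then x else vzero). split.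
  - intros k _. destruct (Nat.eqb_spec k j); subst; auto. apply Hsub.
  - induction J as [|a J IH]; [destruct Hj|]. inversion ND; subst. simpl.
    destruct (Nat.eqb_spec a j).
    + subst. rewrite sumV_zero. now rewrite vadd_0.
      intros k Hk. destruct (Nat.eqb_spec k j); subst; tauto.
    + destruct Hj as [Hj|Hj]; [congruence|]. rewrite <- IH by auto. now rewrite add0l.
Qed.

Lemma inHJ_sumV J L (F : nat -> V) : NoDup J ->
  (forall j, In j L -> In j J /\ H j (F j)) -> inHJ H J (sumV L F).
Proof.
  intro ND. induction L; simpl; intros Hl. apply inHJ_zero.
  apply inHJ_add. destruct (Hl a) as [A B]; auto. eapply inHJ_single; eauto.
  apply IHL; auto.
Qed.

End V.

Lemma existsb_In j L : existsb (Nat.eqb j) L = true <-> In j L.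
Proof.
  rewrite existsb_exists. split.
  - intros [x [Hx E]]. apply Nat.eqb_eq in E. now subst.
  - intros. exists j. split; auto. apply Nat.eqb_refl.
Qed.

Theorem proposition1 (V : IPS) (q qstar : nat) (H : nat -> V -> Prop)
  (fj : nat -> V) (J0 : list nat) (Pi : list nat -> V -> V)
  (rho kappa : R) (J : list nat) :
  (1 <= q)%nat ->
  (forall j, is_subspace (H j)) ->
  (forall j, (1 <= j <= q)%nat -> H j (fj j)) ->
  is_J0 q fj J0 ->
  (length J0 <= qstar)%nat ->
  is_proj_family q qstar H Pi ->
  is_lub (rho_set q qstar H) rho ->
  rho < 1 ->
  index_set q J ->
  (length J <= qstar)%nat ->
  ldiff J0 J <> nil ->
  is_min (kappa_set fj J0 (length (ldiff J0 J))) kappa ->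
  let f := sumV (seq 1 q) fj in
  norm (Pi J0 f) ^ 2 - norm (Pi J f) ^ 2 = norm (vsub f (Pi J f)) ^ 2 /\
  norm (vsub f (Pi J f)) ^ 2 >= (1 - rho ^ 2) * kappa.
Proof.
  intros Hq Hsub Hfj [ND0 HJ0] Hl0 Hproj [Hub Hlub] Hrho [NDJ HJr] HlJ Hne [Hk Hkmin] f.
  assert (Ef : f = sumV J0 fj).
  { unfold f. rewrite (sumV_filter_drop V (fun j => existsb (Nat.eqb j) J0)).
    - apply sumV_perm. apply NoDup_Permutation.
      + apply NoDup_filter, seq_NoDup.
      + auto.
      + intro x. rewrite filter_In, existsb_In, in_seq. split; [tauto|].
        intro Hx. split; auto. apply HJ0 in Hx. lia.
    - intros j Hj Hp. apply in_seq in Hj.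
      assert (~ In j J0) by (rewrite <- existsb_In; congruence).
      assert (~ norm (fj j) > 0) by (intro; apply H0; apply HJ0; split; [lia|auto]).
      apply ip_def. apply sqrt_eq_0. apply ip_pos.
      assert (0 <= norm (fj j)) by apply sqrt_pos. fold (norm (fj j)). lra. }
  assert (IJ0 : index_set q J0).
  { split; auto. intros j Hj. apply HJ0 in Hj. tauto. }
  destruct (Hproj J0 IJ0 ltac:(lia) f) as [P0in P0orth].
  destruct (Hproj J (conj NDJ HJr) ltac:(lia) f) as [Pin Porth].
  assert (finJ0 : inHJ H J0 f).
  { exists fj. split; auto. intros j Hj. apply Hfj. apply HJ0 in Hj. tauto. }
  assert (EP0 : Pi J0 f = f).
  { set (d := vsub f (Pi J0 f)).
    assert (dz : d = vzero).
    { apply ip_def. apply P0orth. apply inHJ_sub; auto. }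
    unfold d, vsub in dz.
    assert (E2: vadd (vadd f (vopp (Pi J0 f))) (Pi J0 f) = Pi J0 f) by now rewrite dz, add0l.
    rewrite <- vadd_assoc, (vadd_comm (vopp _)), vadd_opp, vadd_0 in E2. auto. }
  set (P := Pi J f) in *. set (d := vsub f P).
  assert (Efd : f = vadd d P).
  { unfold d, vsub. rewrite <- vadd_assoc, (vadd_comm (vopp P)), vadd_opp, vadd_0. auto. }
  assert (OdP : ip d P = 0) by (apply Porth; auto).
  split.
  { rewrite EP0, !norm2. rewrite Efd at 1 2.
    rewrite ip_add_l, !ip_add_r, (ip_sym P d), OdP. fold d. ring. }
  set (pJ := fun j => existsb (Nat.eqb j) J).
  set (g := sumV (ldiff J0 J) fj).
  set (s := sumV (filter pJ J0) fj).
  assert (Egs : f = vadd s g).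
  { rewrite Ef, (sumV_filter V pJ). reflexivity. }
  set (h := vsub s P).
  assert (Edgh : d = vadd g h).
  { unfold d, h, vsub. rewrite Egs. rewrite (vadd_comm s g). symmetry. apply vadd_assoc. }
  assert (hin : inHJ H J h).
  { apply inHJ_sub; auto. apply inHJ_sumV; auto. intros j Hj.
    apply filter_In in Hj. destruct Hj as [Hj Hp]. split.
    - now apply existsb_In.
    - apply Hfj. apply HJ0 in Hj. tauto. }
  assert (gin : inHJ H (ldiff J0 J) g).
  { exists fj. split; auto. intros j Hj. apply filter_In in Hj. apply Hfj.
    destruct Hj as [Hj _]; apply HJ0 in Hj. tauto. }
  assert (rho0 : 0 <= rho) by (apply Hub; now left).
  assert (Hkg : kappa <= ip g g).
  { rewrite <- norm2. apply Hkmin. exists (ldiff J0 J). repeat split; auto.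
    - apply NoDup_filter; auto.
    - intros j Hj. apply filter_In in Hj. tauto. }
  set (a := norm g). set (b := norm h).
  assert (a0 : 0 <= a) by apply sqrt_pos.
  assert (b0 : 0 <= b) by apply sqrt_pos.
  assert (rab : 0 <= rho * a * b) by (apply Rmult_le_pos; [apply Rmult_le_pos|]; auto).
  assert (Key : - ip g h <= rho * a * b).
  { destruct (classic (g = vzero)) as [gz|gnz].
    { rewrite gz, ip0l. lra. }
    destruct (classic (h = vzero)) as [hz|hnz].
    { rewrite hz, ip_sym, ip0l. lra. }
    assert (apos : 0 < a).
    { unfold a, norm. apply sqrt_lt_R0. destruct (ip_pos g); auto.
      exfalso; apply gnz, ip_def; auto. }
    assert (bpos : 0 < b).
    { unfold b, norm. apply sqrt_lt_R0. destruct (ip_pos h); auto.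
      exfalso; apply hnz, ip_def; auto. }
    assert (Hc : ip g (vopp h) / (norm g * norm (vopp h)) <= rho).
    { apply Hub. right. exists (ldiff J0 J), J, g, (vopp h). repeat split; auto.
      - apply NoDup_filter; auto.
      - match goal with Hj : In ?j (ldiff J0 J) |- _ => apply filter_In in Hj; destruct Hj as [Hj _]; apply HJ0 in Hj; destruct Hj as [[? ?] _]; lia | Hj : In ?j J |- _ => apply HJr in Hj; lia end.
      - match goal with Hj : In ?j (ldiff J0 J) |- _ => apply filter_In in Hj; destruct Hj as [Hj _]; apply HJ0 in Hj; destruct Hj as [[? ?] _]; lia | Hj : In ?j J |- _ => apply HJr in Hj; lia end.
      - match goal with Hj : In ?j (ldiff J0 J) |- _ => apply filter_In in Hj; destruct Hj as [Hj _]; apply HJ0 in Hj; destruct Hj as [[? ?] _]; lia | Hj : In ?j J |- _ => apply HJr in Hj; lia end.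
      - match goal with Hj : In ?j (ldiff J0 J) |- _ => apply filter_In in Hj; destruct Hj as [Hj _]; apply HJ0 in Hj; destruct Hj as [[? ?] _]; lia | Hj : In ?j J |- _ => apply HJr in Hj; lia end.
      - intros j Hj Hj'. apply filter_In in Hj. destruct Hj as [_ Hn].
        apply existsb_In in Hj'. rewrite Hj' in Hn. discriminate.
      - pose proof (filter_length_le (fun j => negb (existsb (Nat.eqb j) J)) J0).
        unfold ldiff. lia.
      - now apply inHJ_opp.
      - intro E. apply hnz. rewrite <- (vadd_0 h), <- E, vadd_opp. auto. }
    assert (Nh : norm (vopp h) = b).
    { unfold b, norm. now rewrite ip_opp_l, ip_opp_r, Ropp_involutive. }
    rewrite Nh, ip_opp_r in Hc. fold a in Hc.
    apply Rmult_le_compat_r with (r := a * b) in Hc; [|nra].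
    unfold Rdiv in Hc. rewrite Rmult_assoc, Rinv_l in Hc by nra. lra. }
  rewrite norm2. fold d. rewrite Edgh, ip_add_l, !ip_add_r, (ip_sym h g).
  assert (Ea : a * a = ip g g) by (rewrite <- norm2; unfold a; ring).
  assert (Eb : b * b = ip h h) by (rewrite <- norm2; unfold b; ring).
  assert (k0 : 0 <= kappa).
  { destruct Hk as [J' [_ [_ [_ E]]]]. rewrite E, norm2. apply ip_pos. }
  assert (0 <= 1 - rho ^ 2) by nra.
  assert ((1 - rho^2) * kappa <= (1 - rho^2) * (a*a)) by (apply Rmult_le_compat_l; lra).
  assert (Sq : 0 <= (b - rho*a) * (b - rho*a)) by apply Rle_0_sqr.
  rewrite <- Ea, <- Eb. clearbody a b. nra.
Qed.
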